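(* Let $q$ be a meromorphic quadratic differential on $\mathbb{P}^1$ with exactly four poles, all double poles, each of residue $1$, and holomorphic elsewhere. Then the zero partition of $q$ is either $4=2+2$ or $4=1+1+1+1$, i.e. $q$ has two double zeroes or four simple zeroes.
   Context: A double pole $p$ of $q$ has residue $a>0$ if, in a local coordinate $z$ with $z(p)=0$, $q=\bigl(-\frac{a^2}{4\pi^2 z^2}+O(z^{-1})\bigr)dz^2$. Such a $q$ has four zeroes counted with multiplicity. *)

(* Defs.v *)
From HB Require Import structures.
From mathcomp Require Import all_boot all_order all_algebra.
From mathcomp Require Import complex.
From mathcomp Require Import reals trigo.
Set Implicit Arguments. Unset Strict Implicit. Unset Printing Implicit Defensive.
Import Order.TTheory GRing.Theory Num.Theory.
Local Open Scope ring_scope.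

(* A meromorphic quadratic differential on P^1 = C ∪ {∞} is q = f(z) dz^2
   with f = n/d a nonzero rational function (n d : {poly C}, n, d <> 0).
   Points of P^1 are [option C]: [Some c] is the finite point z = c and
   [None] is the point at infinity (local coordinate w = 1/z, where
   q = f(1/w) w^-4 dw^2). *)

Section QD.
Variable C : fieldType.

Definition qd_ord (n d : {poly C}) (x : option C) : int :=
  match x with
  | Some c => (mup c n)%:Z - (mup c d)%:Z
  | None => (size d)%:Z - (size n)%:Z - 4
  end.

(* leading Laurent coefficient of q at x in the standard local coordinate
   (z - c at a finite point c, w = 1/z at infinity): if q has order k at x
   then q = (lcoef * t^k + O(t^(k+1))) dt^2. *)
Definition qd_lcoef (n d : {poly C}) (x : option C) : C :=
  match x with
  | Some c => (n %/ ('X - c%:P) ^+ (mup c n)).[c]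
              / (d %/ ('X - c%:P) ^+ (mup c d)).[c]
  | None => lead_coef n / lead_coef d
  end.

Definition qd_double_pole_res (pi_ : C) (n d : {poly C}) (x : option C) (a : C)
  : Prop :=
  qd_ord n d x = -2 /\ qd_lcoef n d x = - (a ^+ 2) / (4%:R * pi_ ^+ 2).

End QD.

(* Main.v *)
Require Import Defs.
From HB Require Import structures.
From mathcomp Require Import all_boot all_order all_algebra.
From mathcomp Require Import complex.
From mathcomp Require Import reals trigo.
From mathcomp Require Import ring zify.
Import Order.TTheory GRing.Theory Num.Theory.
Local Open Scope ring_scope.
Set Implicit Arguments. Unset Strict Implicit. Unset Printing Implicit Defensive.

Section Alg.
Variable C : fieldType.
Hypothesis two : (2%:R : C) != 0.

Lemma two_eq (u v : C) : 2%:R * (u - v) = 0 -> u = v.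
Proof. by move/eqP; rewrite mulf_eq0 (negbTE two) /= subr_eq0 => /eqP. Qed.

Lemma sq_eq (u v : C) : u ^+ 2 = v ^+ 2 -> u - v = 0 \/ u + v = 0.
Proof.
move=> /eqP; rewrite eqf_sqr => /orP[/eqP->|/eqP->]; [left|right]; ring.
Qed.

Lemma ylemma (y1 y2 y3 y4 : C) :
  y1 != y2 -> y1 != y3 -> y1 != y4 -> y2 != y3 -> y2 != y4 -> y3 != y4 ->
  (y1 - y2) ^+ 2 = (y3 - y4) ^+ 2 -> (y1 - y3) ^+ 2 = (y2 - y4) ^+ 2 ->
  (y1 - y4) ^+ 2 = (y2 - y3) ^+ 2 -> False.
Proof.
move=> n12 n13 n14 n23 n24 n34 /sq_eq h1 /sq_eq h2 /sq_eq h3.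
case: h1 => h1; case: h2 => h2.
- case: h3 => h3.
  + move/eqP: n12; apply; apply: two_eq.
    have -> : 2%:R * (y1 - y2) = (y1 - y2 - (y3 - y4)) + (y1 - y4 - (y2 - y3)) by ring.
    by rewrite h1 h3 addr0.
  + move/eqP: n13; apply; apply: two_eq.
    have -> : 2%:R * (y1 - y3) = (y1 - y2 - (y3 - y4)) + (y1 - y4 + (y2 - y3)) by ring.
    by rewrite h1 h3 addr0.
- move/eqP: n13; apply; apply: two_eq.
  have -> : 2%:R * (y1 - y3) = (y1 - y2 - (y3 - y4)) + (y1 - y3 + (y2 - y4)) by ring.
  by rewrite h1 h2 addr0.
- move/eqP: n12; apply; apply: two_eq.
  have -> : 2%:R * (y1 - y2) = (y1 - y2 + (y3 - y4)) + (y1 - y3 - (y2 - y4)) by ring.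
  by rewrite h1 h2 addr0.
- move/eqP: n14; apply; apply: two_eq.
  have -> : 2%:R * (y1 - y4) = (y1 - y2 + (y3 - y4)) + (y1 - y3 + (y2 - y4)) by ring.
  by rewrite h1 h2 addr0.
Qed.

End Alg.

Definition hE := (hornerD, hornerN, hornerX, hornerC, hornerM, horner_exp, hornerCM, hornerZ, hornerMn).
Section Alg.
Variable C : fieldType.

Lemma pair_scalar (k t n0 n1 p0 p1 : C) :
  k != 0 -> p0 != 0 ->
  k * (n0 * n0) + t * p0 = 0 -> k * (n1 * n0 + n0 * n1) + t * p1 = 0 ->
  t = 0 \/ 2%:R * n1 * p0 - n0 * p1 = 0.
Proof.
move=> k0 p00 e1 e2.
have : k * n0 * (2%:R * n1 * p0 - n0 * p1) = 0.
  have -> : k * n0 * (2%:R * n1 * p0 - n0 * p1) =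
     (k * (n1 * n0 + n0 * n1) + t * p1) * p0 - (k * (n0 * n0) + t * p0) * p1 by ring.
  by rewrite e1 e2; ring.
move/eqP; rewrite !mulf_eq0 (negbTE k0) /= => /orP[/eqP n00|/eqP]; last by right.
left; move: e1; rewrite n00 !mul0r mulr0 add0r => /eqP.
by rewrite mulf_eq0 (negbTE p00) orbF => /eqP.
Qed.

Lemma pair_poly (A B Q : {poly C}) (k t z : C) :
  k != 0 -> (A * B).[z] != 0 ->
  Q = k%:P * ((A^`() * B - A * B^`()) * (A^`() * B - A * B^`())) + t%:P * (A * B) ->
  Q.[z] = 0 -> (Q^`()).[z] = 0 ->
  t = 0 \/ B.[z] ^+ 2 * (2%:R * A.[z] * (A^`()^`()).[z] - (A^`()).[z] ^+ 2)
           = A.[z] ^+ 2 * (2%:R * B.[z] * (B^`()^`()).[z] - (B^`()).[z] ^+ 2).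
Proof.
move=> k0 p0 eQ r0 r1.
move: p0; rewrite hE => p0.
set a0 := A.[z]; set a1 := (A^`()).[z]; set a2 := (A^`()^`()).[z].
set b0 := B.[z]; set b1 := (B^`()).[z]; set b2 := (B^`()^`()).[z].
have r0' : k * ((a1 * b0 - a0 * b1) * (a1 * b0 - a0 * b1)) + t * (a0 * b0) = 0.
  apply: etrans r0; rewrite eQ !hE -/a0 -/a1 -/a2 -/b0 -/b1 -/b2; ring.
have r1' : k * ((a2 * b0 - a0 * b2) * (a1 * b0 - a0 * b1) + (a1 * b0 - a0 * b1) * (a2 * b0 - a0 * b2)) + t * (a1 * b0 + a0 * b1) = 0.
  apply: etrans r1; rewrite eQ !derivE !hE -/a0 -/a1 -/a2 -/b0 -/b1 -/b2. congr (k * _ + _); ring.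
have [->|e] := pair_scalar k0 p0 r0' r1'; first by left.
right; apply/eqP; rewrite -subr_eq0; apply/eqP; rewrite -e -/a0 -/b0; ring.
Qed.

Lemma mup2_root (Q : {poly C}) z : Q != 0 -> (2 <= mup z Q)%N ->
  Q.[z] = 0 /\ (Q^`()).[z] = 0.
Proof.
move=> Q0; rewrite mup_geq // => /dvdpP [R ->].
rewrite expr2 !derivE !hE subrr; split; ring.
Qed.

End Alg.


Section Red.
Variable C : closedFieldType.

Lemma mup_root (Q : {poly C}) c : Q != 0 -> root Q c -> (0 < mup c Q)%N.
Proof. by move=> Q0 r; rewrite -XsubC_dvd // dvdp_XsubCl. Qed.

Lemma mupX1 (c z : C) : mup c ('X - z%:P) = (z == c).
Proof. by have := @mup_XsubCX _ 1 c z; rewrite expr1 => ->; case: (z == c). Qed.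

Lemma dvd_prod_mup (rs : seq C) (m : {poly C}) : m != 0 ->
  (forall c, (count_mem c rs <= mup c m)%N) -> \prod_(z <- rs) ('X - z%:P) %| m.
Proof.
elim: rs m => [|z rs IH] m m0 H; first by rewrite big_nil dvd1p.
have : (0 < mup z m)%N by apply: leq_trans (H z); rewrite /= eqxx.
rewrite -XsubC_dvd // => /dvdpP [m' em].
have m'0 : m' != 0 by apply: contraNneq m0 => e; rewrite em e mul0r.
rewrite big_cons em [m' * _]mulrC dvdp_mul2l ?polyXsubC_eq0 //.
apply: IH => // c; have := H c; rewrite em mupM ?polyXsubC_eq0 // mupX1 /=.
by rewrite addnC leq_add2r.
Qed.

Lemma dvd_mup (d m : {poly C}) : d != 0 -> m != 0 ->
  (forall c, (mup c d <= mup c m)%N) -> d %| m.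
Proof.
move=> d0 m0 H; case: (closed_field_poly_normal d) => rs Hd.
have l0 : lead_coef d != 0 by rewrite lead_coef_eq0.
rewrite Hd dvdpZl //; apply: dvd_prod_mup => // c.
have := H c; rewrite {1}Hd -mul_polyC mupMr ?mu_prod_XsubC //.
by rewrite rootC.
Qed.


Lemma arith1 (a b c f : nat) : (0 < a)%N -> (0 < b)%N -> (0 < c)%N ->
  (a + b).-1 = (c + (f.+1 + f.+1).-1).-1 ->
  b%:Z - c%:Z - 4 = (2 * f)%N%:Z - 3%:Z - a%:Z.
Proof. move=> h1 h2 h3; rewrite -!subn1; lia. Qed.

Lemma reduce (n d : {poly C}) (F : seq C) (k : C) :
  n != 0 -> d != 0 -> uniq F ->
  (forall c, qd_ord n d (Some c) < 0 <-> c \in F) ->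
  (forall c, c \in F -> qd_ord n d (Some c) = -2 /\ qd_lcoef n d (Some c) = k) ->
  exists Q : {poly C}, [/\ Q != 0,
    (forall c, c \notin F -> qd_ord n d (Some c) = (mup c Q)%:Z),
    (forall c, c \in F -> ~~ root Q c),
    (forall c P1, c \in F -> \prod_(z <- F) ('X - z%:P) = ('X - c%:P) * P1 ->
        Q.[c] = k * P1.[c] ^+ 2) &
    (qd_ord n d None = (2 * size F)%:Z - 3%:Z - (size Q)%:Z /\
     qd_lcoef n d None = lead_coef Q)].
Proof.
move=> n0 d0 uF Hneg Hpole.
set P := \prod_(z <- F) ('X - z%:P).
have Pm : P \is monic by apply: monic_prod_XsubC.
have P0 : P != 0 by apply: monic_neq0.
have P20 : P ^+ 2 != 0 by rewrite expf_neq0.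
have nP0 : n * P ^+ 2 != 0 by rewrite mulf_neq0.
have mupP c : mup c (P ^+ 2) = (2 * (c \in F))%N.
  by rewrite expr2 mupM // mu_prod_XsubC count_uniq_mem // mul2n -addnn.
have mupnP c : mup c (n * P ^+ 2) = (mup c n + 2 * (c \in F))%N.
  by rewrite mupM // mupP.
have dvd : d %| n * P ^+ 2.
  apply: dvd_mup => // c; rewrite mupnP.
  case cF: (c \in F).
  - have [h _] := Hpole c cF; move: h; rewrite /qd_ord; lia.
  - have : ~ (qd_ord n d (Some c) < 0) by rewrite Hneg cF.
    rewrite /qd_ord; lia.
set Q := (n * P ^+ 2) %/ d.
have eQ : Q * d = n * P ^+ 2 by rewrite divpK.
have Q0 : Q != 0 by apply: contraNneq nP0 => e; rewrite -eQ e mul0r.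
have mupQ c : (mup c Q + mup c d = mup c n + 2 * (c \in F))%N.
  by rewrite -mupM // eQ mupnP.
exists Q; split => //.
- move=> c cF; rewrite /qd_ord; have := mupQ c; rewrite (negbTE cF); lia.
- move=> c cF; apply/negP => r; have := mup_root Q0 r; have := mupQ c.
  have [h _] := Hpole c cF; move: h; rewrite /qd_ord cF; lia.
- move=> c P1 cF eP.
  have [h hl] := Hpole c cF.
  case: (multiplicity_XsubC n c) => a [n1 /implyP/(_ n0) rn1 en].
  case: (multiplicity_XsubC d c) => b [d1 /implyP/(_ d0) rd1 ed].
  have ma : mup c n = a by rewrite en mupMr // mup_XsubCX eqxx.
  have mb : mup c d = b by rewrite ed mupMr // mup_XsubCX eqxx.
  have hab : b = (a + 2)%N by move: h; rewrite /qd_ord ma mb; lia.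
  move: hl; rewrite /qd_lcoef ma mb en ed !mulpK ?expf_neq0 ?polyXsubC_eq0 // => hl.
  have X0 : ('X - c%:P) ^+ b != 0 by rewrite expf_neq0 ?polyXsubC_eq0.
  have e2 : n1 * P1 ^+ 2 = Q * d1.
    apply: (mulIf X0).
    have -> : n1 * P1 ^+ 2 * ('X - c%:P) ^+ b = n * P ^+ 2.
      by rewrite en eP hab exprD; ring.
    by rewrite -eQ ed mulrA.
  have := congr1 (fun p => p.[c]) e2; rewrite /= !hE => e3.
  have d1c : d1.[c] != 0 by [].
  rewrite -hl; apply: (mulIf d1c); rewrite -e3; field; exact: d1c.
- split.
  + have := congr1 (fun p : {poly C} => size p) eQ.
    rewrite /= !size_mul // /P size_prod_XsubC.
    apply: arith1; by rewrite size_poly_gt0.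
  + rewrite /qd_lcoef; have := congr1 lead_coef eQ.
    rewrite !lead_coefM ?lead_coef_exp !(monicP Pm) ?expr1n !mulr1 => e.
    by rewrite -e mulfK // lead_coef_eq0.
Qed.

End Red.

Section Fin.
Variable C : closedFieldType.

Lemma mup_gt0_root (Q : {poly C}) c : Q != 0 -> (0 < mup c Q)%N -> root Q c.
Proof. by move=> Q0; rewrite -XsubC_dvd // dvdp_XsubCl. Qed.

Lemma zlist (Q : {poly C}) (F rs : seq C) (o : option C -> int) :
  Q != 0 -> uniq rs -> (forall c, (0 < mup c Q)%N = (c \in rs)) ->
  (forall c, c \notin F -> o (Some c) = (mup c Q)%:Z) ->
  (forall c, c \in F -> o (Some c) < 0 /\ ~~ root Q c) ->
  uniq (map Some rs ++ (if 0 < o None then [:: None] else [::])) /\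
  (forall x, 0 < o x <-> x \in map Some rs ++ (if 0 < o None then [:: None] else [::])).
Proof.
move=> Q0 urs Hrs H1 H2.
set L := (if 0 < o None then [:: None] else [::]).
have LS c : (Some c \in L) = false by rewrite /L; case: ifP.
have LN : (None \in L) = (0 < o None) by rewrite /L; case: ifP.
have NS : (None \in map Some rs) = false by apply/negP => /mapP; case.
split.
  rewrite cat_uniq (map_inj_uniq (@Some_inj _)) urs /=.
  rewrite /L; case: ifP => //= _; rewrite orbF andbT NS //.
case=> [c|]; last by rewrite mem_cat NS LN.
rewrite mem_cat LS orbF (mem_map (@Some_inj _)).
case cF: (c \in F).
  have [h r] := H2 c cF; split => [h'|].
    by move: h'; rewrite ltNge (ltW h).
  by rewrite -Hrs => /(mup_gt0_root Q0); rewrite (negbTE r).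
by rewrite H1 ?cF // -Hrs; split; lia.
Qed.

End Fin.

Section Fin2.
Variable C : closedFieldType.

Lemma roots_simple (P : {poly C}) : P != 0 ->
  (forall r, P.[r] = 0 -> (P^`()).[r] = 0 -> False) ->
  exists rs : seq C, [/\ uniq rs, size rs = (size P).-1 &
     forall c, mup c P = (c \in rs)].
Proof.
move=> P0 nd; case: (closed_field_poly_normal P) => rs eP.
have l0 : lead_coef P != 0 by rewrite lead_coef_eq0.
have mupP c : mup c P = count_mem c rs.
  by rewrite {1}eP -mul_polyC mupMr ?rootC // mu_prod_XsubC.
have cnt c : count_mem c rs = (c \in rs).
  case: (boolP (c \in rs)) => h; last by apply/count_memPn.
  have : (0 < count_mem c rs)%N by rewrite -has_count has_pred1.
  have : ~ (2 <= count_mem c rs)%N.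
    rewrite -mupP => /(mup2_root P0) [r0 r1]; exact: (nd c r0 r1).
  lia.
exists rs; split.
- by apply: count_mem_uniq.
- by rewrite {1}eP size_scale // size_prod_XsubC.
- by move=> c; rewrite mupP cnt.
Qed.

End Fin2.

Section Fin3.
Variable C : closedFieldType.

Lemma fin22 (Q N : {poly C}) (F : seq C) (o : option C -> int) (k : C) :
  k != 0 -> Q = k%:P * (N * N) -> (2 <= size N <= 3)%N ->
  (forall r, N.[r] = 0 -> (N^`()).[r] = 0 -> False) ->
  (size F = 4 \/ (size F = 3 /\ size N = 3))%N ->
  (forall c, c \notin F -> o (Some c) = (mup c Q)%:Z) ->
  (forall c, c \in F -> o (Some c) < 0 /\ ~~ root Q c) ->
  o None = (2 * size F)%N%:Z - 3%:Z - (size Q)%:Z ->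
  exists zs, [/\ uniq zs, (forall x, 0 < o x <-> x \in zs) &
    (size zs = 2 /\ forall x, x \in zs -> o x = 2)].
Proof.
move=> k0 eQ sN nd hF H1 H2 H3.
have N0 : N != 0 by rewrite -size_poly_gt0; case/andP: sN => /ltnW.
have NN0 : N * N != 0 by rewrite mulf_neq0.
have Q0 : Q != 0 by rewrite eQ mulf_neq0 ?polyC_eq0.
have [rs [urs srs mrs]] := roots_simple N0 nd.
have mQ c : mup c Q = (2 * (c \in rs))%N.
  by rewrite eQ mupMr ?rootC // mupM // mrs mul2n addnn.
have Hrs c : (0 < mup c Q)%N = (c \in rs) by rewrite mQ; case: (c \in rs).
have [uz iz] := zlist Q0 urs Hrs H1 H2.
eexists; split; [exact: uz | exact: iz |].
have sQ : size Q = ((size N).*2).-1.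
  by rewrite eQ size_Cmul // size_mul // addnn.
have oS r : r \in rs -> o (Some r) = 2.
  move=> rr; have rF : r \notin F.
    apply/negP => /H2 [_]; rewrite (mup_gt0_root Q0) // Hrs //.
  by rewrite H1 // mQ rr.
have [e3|e2] : size N = 3%N \/ size N = 2%N by lia.
- have -> : (0 < o None) = false.
    rewrite H3 sQ e3; case: hF => [->|[-> _]]; by [].
  rewrite cats0 size_map srs e3; split => // x /mapP [r rr ->]; exact: oS.
- have hF4 : size F = 4%N by case: hF => // [[_]]; rewrite e2.
  have oN : o None = 2 by rewrite H3 sQ e2 hF4.
  rewrite oN /= size_cat size_map srs e2; split => // x.
  rewrite mem_cat inE => /orP [/mapP [r rr ->]|/eqP ->]; [exact: oS | exact: oN].
Qed.

Lemma fin1111 (Q : {poly C}) (F : seq C) (o : option C -> int) :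
  Q != 0 -> (forall r, Q.[r] = 0 -> (Q^`()).[r] = 0 -> False) ->
  ((size F = 4 /\ 4 <= size Q <= 5) \/ (size F = 3 /\ size Q = 5))%N ->
  (forall c, c \notin F -> o (Some c) = (mup c Q)%:Z) ->
  (forall c, c \in F -> o (Some c) < 0 /\ ~~ root Q c) ->
  o None = (2 * size F)%N%:Z - 3%:Z - (size Q)%:Z ->
  exists zs, [/\ uniq zs, (forall x, 0 < o x <-> x \in zs) &
    (size zs = 4 /\ forall x, x \in zs -> o x = 1)].
Proof.
move=> Q0 nd hF H1 H2 H3.
have [rs [urs srs mrs]] := roots_simple Q0 nd.
have Hrs c : (0 < mup c Q)%N = (c \in rs) by rewrite mrs; case: (c \in rs).
have [uz iz] := zlist Q0 urs Hrs H1 H2.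
eexists; split; [exact: uz | exact: iz |].
have oS r : r \in rs -> o (Some r) = 1.
  move=> rr; have rF : r \notin F.
    apply/negP => /H2 [_]; rewrite (mup_gt0_root Q0) // Hrs //.
  by rewrite H1 // mrs rr.
case: hF => [[hF4 /andP [s4 s5]]|[hF3 s5]].
- have [e4|e5] : size Q = 4%N \/ size Q = 5%N by lia.
  + have oN : o None = 1 by rewrite H3 e4 hF4.
    rewrite oN /= size_cat size_map srs e4; split => // x.
    rewrite mem_cat inE => /orP [/mapP [r rr ->]|/eqP ->]; [exact: oS | exact: oN].
  + have -> : (0 < o None) = false by rewrite H3 e5 hF4.
    rewrite cats0 size_map srs e5; split => // x /mapP [r rr ->]; exact: oS.
- have -> : (0 < o None) = false by rewrite H3 s5 hF3.
  rewrite cats0 size_map srs s5; split => // x /mapP [r rr ->]; exact: oS.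
Qed.

End Fin3.

Definition pC := (polyCD, polyCN, polyCB, polyCM, polyC_natr, polyC1, polyC0).

Section Pen.
Variable C : fieldType.

Definition A2 (a b : C) : {poly C} := ('X - a%:P) * ('X - b%:P).
Definition Npair (A B : {poly C}) := A^`() * B - A * B^`().

Lemma A2_jet (a b z : C) : [/\ (A2 a b).[z] = (z - a) * (z - b),
  ((A2 a b)^`()).[z] = (z - a) + (z - b) & (((A2 a b)^`())^`()).[z] = 2%:R].
Proof. rewrite /A2 !derivE !hE; split; ring. Qed.

Lemma ar2 (t p : nat) : (0 < p)%N -> ((t + p).-1 <= p)%N -> (t <= 1)%N.
Proof. rewrite -subn1; lia. Qed.

Lemma pencil (Q R P : {poly C}) (rs : seq C) : uniq rs ->
  P = \prod_(z <- rs) ('X - z%:P) -> (forall z, z \in rs -> Q.[z] = R.[z]) ->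
  (size (Q - R)%R <= size P)%N -> exists t, Q = R + t%:P * P.
Proof.
move=> urs eP hQ sD.
have : P %| Q - R.
  rewrite eP; apply: uniq_roots_dvdp; last by rewrite uniq_rootsE.
  by apply/allP => z zr; rewrite /root !hE hQ // subrr.
move/dvdpP => [T eT].
have P0 : P != 0 by rewrite eP monic_neq0 // monic_prod_XsubC.
have [T00|T0] := eqVneq T 0.
  exists 0; rewrite polyC0 mul0r addr0; apply/eqP; rewrite -subr_eq0 eT T00 mul0r //.
have sT : (size T <= 1)%N.
  move: sD; rewrite eT size_mul //; apply: ar2.
  by rewrite size_poly_gt0.
exists (T`_0); rewrite -(size1_polyC sT) -eT; ring.
Qed.

Lemma N1_poly (a b c d : C) :
  Npair (A2 a b) (A2 c d) =
  Poly [:: a * b * (c + d) - (a + b) * (c * d); 2%:R * (c * d - a * b); a + b - c - d].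
Proof. rewrite /Npair /A2 /= !cons_poly_def !derivE !pC; ring. Qed.

Lemma P1_poly (a b c d : C) :
  A2 a b * A2 c d = Poly [:: a * b * c * d; - (a * b * c + a * b * d + a * c * d + b * c * d);
     a * b + a * c + a * d + b * c + b * d + c * d; - (a + b + c + d); 1].
Proof. rewrite /A2 /= !cons_poly_def !pC; ring. Qed.

End Pen.

Section Case1.
Variable C : fieldType.
Hypothesis two : (2%:R : C) != 0.

Lemma A2_v (a b z : C) : (A2 a b).[z] = (z - a) * (z - b).
Proof. by case: (A2_jet a b z). Qed.
Lemma A2_d1 (a b z : C) : ((A2 a b)^`()).[z] = (z - a) + (z - b).
Proof. by case: (A2_jet a b z). Qed.
Lemma A2_d2 (a b z : C) : (((A2 a b)^`())^`()).[z] = 2%:R.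
Proof. by case: (A2_jet a b z). Qed.

Lemma N_val (A B : {poly C}) z :
  (Npair A B).[z] = (A^`()).[z] * B.[z] - A.[z] * (B^`()).[z].
Proof. by rewrite /Npair !hE. Qed.

Lemma N_dval (A B : {poly C}) z :
  ((Npair A B)^`()).[z] = (A^`()^`()).[z] * B.[z] - A.[z] * (B^`()^`()).[z].
Proof. rewrite /Npair !derivE !hE; ring. Qed.

Lemma size_N1 (a b c d : C) : (size (Npair (A2 a b) (A2 c d)) <= 3)%N.
Proof. by rewrite N1_poly; apply: leq_trans (size_Poly _) _. Qed.

Lemma coefs5 (k t n0 n1 n2 e0 e1 e2 e3 : C) :
  k%:P * (Poly [:: n0; n1; n2] * Poly [:: n0; n1; n2]) +
  t%:P * Poly [:: e0; e1; e2; e3; 1] =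
  Poly [:: k * (n0 * n0) + t * e0; k * (n0 * n1 + n1 * n0) + t * e1;
           k * (n1 * n1 + n0 * n2 + n2 * n0) + t * e2;
           k * (n1 * n2 + n2 * n1) + t * e3; k * (n2 * n2) + t].
Proof. rewrite /= !cons_poly_def !pC; ring. Qed.

Lemma ar3 (bk s n : nat) : (bk <= 1)%N -> (s <= (n + n).-1)%N -> (n <= 3)%N ->
  ((bk + s).-1 <= 5)%N.
Proof. rewrite -!subn1; lia. Qed.

Lemma c1_pen (a b c d k : C) (Q : {poly C}) :
  uniq [:: a; b; c; d] -> (size Q <= 5)%N ->
  Q.[a] = k * ((a - b) * (a - c) * (a - d)) ^+ 2 ->
  Q.[b] = k * ((b - a) * (b - c) * (b - d)) ^+ 2 ->
  Q.[c] = k * ((c - a) * (c - b) * (c - d)) ^+ 2 ->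
  Q.[d] = k * ((d - a) * (d - b) * (d - c)) ^+ 2 ->
  exists t, Q = k%:P * (Npair (A2 a b) (A2 c d) * Npair (A2 a b) (A2 c d))
                + t%:P * (A2 a b * A2 c d).
Proof.
move=> u sQ ha hb hc hd.
have eP : A2 a b * A2 c d = \prod_(z <- [:: a; b; c; d]) ('X - z%:P).
  by rewrite !big_cons big_nil /A2; ring.
apply: (pencil u eP).
  move=> z; rewrite !inE => /or4P [] /eqP ->; rewrite !hE;
  rewrite ?ha ?hb ?hc ?hd ?A2_v ?A2_d1; ring.
apply: (leq_trans (size_add _ _)); rewrite size_opp geq_max.
have -> : size (A2 a b * A2 c d) = 5%N by rewrite eP size_prod_XsubC.
rewrite sQ /=.
apply: (leq_trans (size_mul_leq _ _)); rewrite size_polyC.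
exact: (ar3 (leq_b1 _) (size_mul_leq _ _) (size_N1 a b c d)).
Qed.

End Case1.

Section Case1b.
Variable C : fieldType.
Hypothesis two : (2%:R : C) != 0.

Lemma ycond4 (xa xb xc xd : C) : xa != 0 -> xb != 0 -> xc != 0 -> xd != 0 ->
  (xc * xd) ^+ 2 * (2%:R * (xa * xb) * 2%:R - (xa + xb) ^+ 2) =
  (xa * xb) ^+ 2 * (2%:R * (xc * xd) * 2%:R - (xc + xd) ^+ 2) ->
  (xa^-1 - xb^-1) ^+ 2 = (xc^-1 - xd^-1) ^+ 2.
Proof.
move=> na nb nc nd H.
have nz : (xa * xb * xc * xd) ^+ 2 != 0 by rewrite expf_neq0 // !mulf_neq0.
have L1 : (xa^-1 - xb^-1) ^+ 2 * (xa * xb * xc * xd) ^+ 2 =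
   - ((xc * xd) ^+ 2 * (2%:R * (xa * xb) * 2%:R - (xa + xb) ^+ 2)) by field; rewrite ?na ?nb ?nc ?nd.
have L2 : (xc^-1 - xd^-1) ^+ 2 * (xa * xb * xc * xd) ^+ 2 =
   - ((xa * xb) ^+ 2 * (2%:R * (xc * xd) * 2%:R - (xc + xd) ^+ 2)) by field; rewrite ?na ?nb ?nc ?nd.
by apply: (mulIf nz); rewrite L1 L2 H.
Qed.

Lemma c1_fin (a b c d k t z : C) (Q : {poly C}) : k != 0 -> t != 0 ->
  Q = k%:P * (Npair (A2 a b) (A2 c d) * Npair (A2 a b) (A2 c d))
      + t%:P * (A2 a b * A2 c d) ->
  Q.[z] = 0 -> (Q^`()).[z] = 0 -> z != a -> z != b -> z != c -> z != d ->
  ((z - a)^-1 - (z - b)^-1) ^+ 2 = ((z - c)^-1 - (z - d)^-1) ^+ 2.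
Proof.
move=> k0 t0 eQ r0 r1 za zb zc zd.
have nz : (A2 a b * A2 c d).[z] != 0.
  by rewrite hornerM !A2_v !mulf_neq0 // subr_eq0.
case: (pair_poly k0 nz eQ r0 r1) => [t00|]; first by move/eqP: t0.
rewrite !A2_v !A2_d1 !A2_d2 => e.
by apply: ycond4 => //; rewrite subr_eq0.
Qed.

Lemma c1_inf (a b c d k t : C) (Q : {poly C}) : k != 0 -> t != 0 ->
  Q = k%:P * (Npair (A2 a b) (A2 c d) * Npair (A2 a b) (A2 c d))
      + t%:P * (A2 a b * A2 c d) ->
  (size Q <= 3)%N -> (a - b) ^+ 2 = (c - d) ^+ 2.
Proof.
move=> k0 t0 eQ sQ.
rewrite N1_poly P1_poly coefs5 in eQ.
have q4 : Q`_4 = 0 by apply: nth_default; apply: leq_trans sQ _.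
have q3 : Q`_3 = 0 by apply: nth_default.
move: q4 q3; rewrite eQ !coef_Poly /= -[t in _ + t]mulr1 => q4 q3.
have := pair_scalar k0 (oner_neq0 C) q4 q3.
case=> [t00|h]; first by move/eqP: t0.
apply/eqP; rewrite -subr_eq0; apply/eqP; rewrite -h; ring.
Qed.

Lemma c1_nonconst (a b c d : C) : a != c -> a != d ->
  (2 <= size (Npair (A2 a b) (A2 c d)))%N.
Proof.
move=> ac ad; rewrite ltnNge; apply/negP => sN.
have n1 : (Npair (A2 a b) (A2 c d))`_1 = 0 by apply: nth_default.
have n2 : (Npair (A2 a b) (A2 c d))`_2 = 0 by apply: nth_default; apply: leq_trans sN _.
move: n1 n2; rewrite N1_poly !coef_Poly /= => n1 n2.
have e1 : c * d - a * b = 0.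
  by move/eqP: n1; rewrite mulf_eq0 (negbTE two) /= => /eqP.
have : (a - c) * (a - d) = 0.
  have -> : (a - c) * (a - d) = - a * (a + b - c - d) + (c * d - a * b) + a * (a + b - c - d) * 2%:R by ring.
  by rewrite n2 e1; ring.
by move/eqP; rewrite mulf_eq0 !subr_eq0 (negbTE ac) (negbTE ad).
Qed.

Lemma c1_nodouble (a b c d r : C) : a != c -> a != d -> b != c -> b != d ->
  (Npair (A2 a b) (A2 c d)).[r] = 0 ->
  ((Npair (A2 a b) (A2 c d))^`()).[r] = 0 -> False.
Proof.
move=> ac ad bc bd; rewrite N_val N_dval !A2_v !A2_d1 !A2_d2 => h1 h2.
have : (2%:R * 2%:R) * ((a - c) * (a - d) * (b - c) * (b - d)) = 0.
  have -> : (2%:R * 2%:R) * ((a - c) * (a - d) * (b - c) * (b - d)) =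
    (2%:R * ((r - c) * (r - d)) - (r - a) * (r - b) * 2%:R) ^+ 2 +
    2%:R * 2%:R * ((r - a) + (r - b) - ((r - c) + (r - d))) *
    (((r - a) + (r - b)) * ((r - c) * (r - d)) - (r - a) * (r - b) * ((r - c) + (r - d)))
    by ring.
  by rewrite h1 h2; ring.
move/eqP; rewrite !mulf_eq0 (negbTE two) !subr_eq0 (negbTE ac) (negbTE ad).
by rewrite (negbTE bc) (negbTE bd).
Qed.

End Case1b.

Section Core1.
Variable C : fieldType.
Hypothesis two : (2%:R : C) != 0.

Lemma yd (r a b : C) : a != b -> (r - a)^-1 != (r - b)^-1.
Proof.
move=> ab; apply/negP => /eqP /invr_inj e; move/eqP: ab; apply.
have -> : a = r - (r - a) by ring.
by rewrite e; ring.
Qed.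

Lemma core1 (a b c d k : C) (Q : {poly C}) :
  a != b -> a != c -> a != d -> b != c -> b != d -> c != d ->
  k != 0 -> (size Q <= 5)%N ->
  Q.[a] = k * ((a - b) * (a - c) * (a - d)) ^+ 2 ->
  Q.[b] = k * ((b - a) * (b - c) * (b - d)) ^+ 2 ->
  Q.[c] = k * ((c - a) * (c - b) * (c - d)) ^+ 2 ->
  Q.[d] = k * ((d - a) * (d - b) * (d - c)) ^+ 2 ->
  (exists N : {poly C}, [/\ Q = k%:P * (N * N), (2 <= size N <= 3)%N &
      forall r, N.[r] = 0 -> (N^`()).[r] = 0 -> False])
  \/ ((forall r, Q.[r] = 0 -> (Q^`()).[r] = 0 -> False) /\ (4 <= size Q)%N).
Proof.
move=> ab ac ad bc bd cd k0 sQ ha hb hc hd.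
have ba := ab; rewrite eq_sym in ba. have ca := ac; rewrite eq_sym in ca.
have da := ad; rewrite eq_sym in da. have cb := bc; rewrite eq_sym in cb.
have db := bd; rewrite eq_sym in db. have dc := cd; rewrite eq_sym in dc.
have U (p1 p2 p3 p4 : C) : p1 != p2 -> p1 != p3 -> p1 != p4 -> p2 != p3 -> p2 != p4 ->
    p3 != p4 -> uniq [:: p1; p2; p3; p4].
  move=> h12 h13 h14 h23 h24 h34.
  by rewrite /= !inE !negb_or h12 h13 h14 h23 h24 h34.
have [t1 e1] := c1_pen two (U _ _ _ _ ab ac ad bc bd cd) sQ ha hb hc hd.
have ha2 : Q.[a] = k * ((a - c) * (a - b) * (a - d)) ^+ 2 by rewrite ha; ring.
have hc2 : Q.[c] = k * ((c - a) * (c - b) * (c - d)) ^+ 2 by rewrite hc.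
have hb2 : Q.[b] = k * ((b - a) * (b - c) * (b - d)) ^+ 2 by rewrite hb.
have hd2 : Q.[d] = k * ((d - a) * (d - c) * (d - b)) ^+ 2 by rewrite hd; ring.
have [t2 e2] := c1_pen two (U _ _ _ _ ac ab ad cb cd bd) sQ ha2 hc2 hb2 hd2.
have ha3 : Q.[a] = k * ((a - d) * (a - b) * (a - c)) ^+ 2 by rewrite ha; ring.
have hd3 : Q.[d] = k * ((d - a) * (d - b) * (d - c)) ^+ 2 by rewrite hd.
have hb3 : Q.[b] = k * ((b - a) * (b - d) * (b - c)) ^+ 2 by rewrite hb; ring.
have hc3 : Q.[c] = k * ((c - a) * (c - d) * (c - b)) ^+ 2 by rewrite hc; ring.
have [t3 e3] := c1_pen two (U _ _ _ _ ad ab ac db dc bc) sQ ha3 hd3 hb3 hc3.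
have [t10|t10] := eqVneq t1 0.
  left; exists (Npair (A2 a b) (A2 c d)); split.
  - by rewrite e1 t10 polyC0 mul0r addr0.
  - by rewrite (c1_nonconst two) // size_N1.
  - move=> r; exact: (c1_nodouble two ac ad bc bd).
have [t20|t20] := eqVneq t2 0.
  left; exists (Npair (A2 a c) (A2 b d)); split.
  - by rewrite e2 t20 polyC0 mul0r addr0.
  - by rewrite (c1_nonconst two) // size_N1.
  - move=> r; exact: (c1_nodouble two ab ad cb cd).
have [t30|t30] := eqVneq t3 0.
  left; exists (Npair (A2 a d) (A2 b c)); split.
  - by rewrite e3 t30 polyC0 mul0r addr0.
  - by rewrite (c1_nonconst two) // size_N1.
  - move=> r; exact: (c1_nodouble two ab ac db dc).
right; split.
  move=> r r0 r1.
  have sq0 (x : C) : x != 0 -> k * x ^+ 2 != 0 by move=> x0; rewrite mulf_neq0 // expf_neq0.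
  have nz p : p = a \/ p = b \/ p = c \/ p = d -> Q.[p] != 0.
    case=> [->|[->|[->|->]]]; [rewrite ha|rewrite hb|rewrite hc|rewrite hd];
      apply: sq0; rewrite !mulf_neq0 //; by rewrite subr_eq0.
  have ra : r != a by apply/eqP => e; move: (nz r (or_introl e)); rewrite r0 eqxx.
  have rb : r != b.
    by apply/eqP => e; move: (nz r (or_intror (or_introl e))); rewrite r0 eqxx.
  have rc : r != c.
    by apply/eqP => e; move: (nz r (or_intror (or_intror (or_introl e)))); rewrite r0 eqxx.
  have rd : r != d.
    by apply/eqP => e; move: (nz r (or_intror (or_intror (or_intror e)))); rewrite r0 eqxx.
  have h1 := c1_fin k0 t10 e1 r0 r1 ra rb rc rd.
  have h2 := c1_fin k0 t20 e2 r0 r1 ra rc rb rd.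
  have h3 := c1_fin k0 t30 e3 r0 r1 ra rd rb rc.
  by apply: (ylemma two _ _ _ _ _ _ h1 h2 h3); apply: yd.
rewrite leqNgt; apply/negP => s3.
have h1 := c1_inf k0 t10 e1 s3.
have h2 := c1_inf k0 t20 e2 s3.
have h3 := c1_inf k0 t30 e3 s3.
exact: (ylemma two ab ac ad bc bd cd h1 h2 h3).
Qed.

End Core1.

Section Case2.
Variable C : fieldType.
Hypothesis two : (2%:R : C) != 0.

Lemma L1_v (c z : C) : ('X - c%:P).[z] = z - c.
Proof. by rewrite !hE. Qed.
Lemma L1_d1 (c z : C) : (('X - c%:P)^`()).[z] = 1.
Proof. by rewrite derivXsubC hornerC. Qed.
Lemma L1_d2 (c z : C) : ((('X - c%:P)^`())^`()).[z] = 0.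
Proof. by rewrite derivXsubC -polyC1 derivC horner0. Qed.

Lemma N2_poly (a b c : C) :
  Npair (A2 a b) ('X - c%:P) = Poly [:: c * (a + b) - a * b; - (2%:R * c); 1].
Proof. rewrite /Npair /A2 /= !cons_poly_def !derivE !pC; ring. Qed.

Lemma NN2_poly (k n0 n1 : C) :
  k%:P * (Poly [:: n0; n1; 1] * Poly [:: n0; n1; 1]) =
  Poly [:: k * (n0 * n0); k * (n0 * n1 + n1 * n0); k * (n1 * n1 + n0 + n0);
           k * (n1 + n1); k].
Proof. rewrite /= !cons_poly_def !pC; ring. Qed.

Lemma size4 (p : {poly C}) : (size p <= 5)%N -> p`_4 = 0 -> (size p <= 4)%N.
Proof.
move=> s5 p4; rewrite leqNgt; apply/negP => s4.
have e5 : size p = 5%N by apply/eqP; rewrite eqn_leq s5 s4.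
have : lead_coef p = 0 by rewrite lead_coefE e5.
by move/eqP; rewrite lead_coef_eq0 => /eqP p0; move: e5; rewrite p0 size_poly0.
Qed.

Lemma c2_pen (a b c k : C) (Q : {poly C}) :
  uniq [:: a; b; c] -> size Q = 5%N -> lead_coef Q = k ->
  Q.[a] = k * ((a - b) * (a - c)) ^+ 2 ->
  Q.[b] = k * ((b - a) * (b - c)) ^+ 2 ->
  Q.[c] = k * ((c - a) * (c - b)) ^+ 2 ->
  exists t, Q = k%:P * (Npair (A2 a b) ('X - c%:P) * Npair (A2 a b) ('X - c%:P))
                + t%:P * (A2 a b * ('X - c%:P)).
Proof.
move=> u sQ lQ ha hb hc.
have eP : A2 a b * ('X - c%:P) = \prod_(z <- [:: a; b; c]) ('X - z%:P).
  by rewrite !big_cons big_nil /A2; ring.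
apply: (pencil u eP).
  move=> z; rewrite !inE => /or3P [] /eqP ->; rewrite !hE;
  rewrite ?ha ?hb ?hc ?A2_v ?A2_d1 ?L1_d1; ring.
have -> : size (A2 a b * ('X - c%:P)) = 4%N by rewrite eP size_prod_XsubC.
apply: size4.
  apply: (leq_trans (size_add _ _)); rewrite size_opp geq_max sQ leqnn /=.
  by rewrite N2_poly NN2_poly; apply: leq_trans (size_Poly _) _.
rewrite coefB N2_poly NN2_poly coef_Poly /=.
have -> : Q`_4 = lead_coef Q by rewrite lead_coefE sQ.
by rewrite lQ subrr.
Qed.

Lemma ycond3 (xa xb xc : C) : xa != 0 -> xb != 0 -> xc != 0 ->
  xc ^+ 2 * (2%:R * (xa * xb) * 2%:R - (xa + xb) ^+ 2) =
  (xa * xb) ^+ 2 * (2%:R * xc * 0 - 1 ^+ 2) ->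
  (xa^-1 - xb^-1) ^+ 2 = (xc^-1 - 0) ^+ 2.
Proof.
move=> na nb nc H.
have nz : (xa * xb * xc) ^+ 2 != 0 by rewrite expf_neq0 // !mulf_neq0.
have L1 : (xa^-1 - xb^-1) ^+ 2 * (xa * xb * xc) ^+ 2 =
   - (xc ^+ 2 * (2%:R * (xa * xb) * 2%:R - (xa + xb) ^+ 2)) by field; rewrite ?na ?nb ?nc.
have L2 : (xc^-1 - 0) ^+ 2 * (xa * xb * xc) ^+ 2 =
   - ((xa * xb) ^+ 2 * (2%:R * xc * 0 - 1 ^+ 2)) by field; rewrite ?na ?nb ?nc.
by apply: (mulIf nz); rewrite L1 L2 H.
Qed.

Lemma c2_fin (a b c k t z : C) (Q : {poly C}) : k != 0 -> t != 0 ->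
  Q = k%:P * (Npair (A2 a b) ('X - c%:P) * Npair (A2 a b) ('X - c%:P))
      + t%:P * (A2 a b * ('X - c%:P)) ->
  Q.[z] = 0 -> (Q^`()).[z] = 0 -> z != a -> z != b -> z != c ->
  ((z - a)^-1 - (z - b)^-1) ^+ 2 = ((z - c)^-1 - 0) ^+ 2.
Proof.
move=> k0 t0 eQ r0 r1 za zb zc.
have nz : (A2 a b * ('X - c%:P)).[z] != 0.
  by rewrite hornerM A2_v L1_v !mulf_neq0 //; rewrite subr_eq0.
case: (pair_poly k0 nz eQ r0 r1) => [t00|]; first by move/eqP: t0.
rewrite !A2_v !A2_d1 !A2_d2 L1_v L1_d1 L1_d2 => e.
by apply: ycond3 => //; rewrite subr_eq0.
Qed.

Lemma c2_size (a b c : C) : size (Npair (A2 a b) ('X - c%:P)) = 3%N.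
Proof.
apply/eqP; rewrite eqn_leq; apply/andP; split.
  by rewrite N2_poly; apply: leq_trans (size_Poly _) _.
rewrite ltnNge; apply/negP => s.
have := nth_default (0 : C) s; rewrite N2_poly coef_Poly /= => /eqP.
by rewrite oner_eq0.
Qed.

Lemma c2_nodouble (a b c r : C) : c != a -> c != b ->
  (Npair (A2 a b) ('X - c%:P)).[r] = 0 ->
  ((Npair (A2 a b) ('X - c%:P))^`()).[r] = 0 -> False.
Proof.
move=> ca cb; rewrite N_val N_dval !A2_v !A2_d1 !A2_d2 L1_v L1_d1 L1_d2 => h1 h2.
have rc : r = c.
  apply/eqP; rewrite -subr_eq0; apply/eqP.
  move/eqP: h2; rewrite mulr0 subr0 mulf_eq0 (negbTE two) /= => /eqP //.
move: h1; rewrite rc subrr mulr0 sub0r mulr1 => /eqP.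
by rewrite oppr_eq0 mulf_eq0 !subr_eq0 (negbTE ca) (negbTE cb).
Qed.

End Case2.

Section Core2.
Variable C : fieldType.
Hypothesis two : (2%:R : C) != 0.

Lemma core2 (a b c k : C) (Q : {poly C}) :
  a != b -> a != c -> b != c -> k != 0 -> size Q = 5%N -> lead_coef Q = k ->
  Q.[a] = k * ((a - b) * (a - c)) ^+ 2 ->
  Q.[b] = k * ((b - a) * (b - c)) ^+ 2 ->
  Q.[c] = k * ((c - a) * (c - b)) ^+ 2 ->
  (exists N : {poly C}, [/\ Q = k%:P * (N * N), size N = 3%N &
      forall r, N.[r] = 0 -> (N^`()).[r] = 0 -> False])
  \/ (forall r, Q.[r] = 0 -> (Q^`()).[r] = 0 -> False).
Proof.
move=> ab ac bc k0 sQ lQ ha hb hc.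
have ba := ab; rewrite eq_sym in ba. have ca := ac; rewrite eq_sym in ca.
have cb := bc; rewrite eq_sym in cb.
have U (p1 p2 p3 : C) : p1 != p2 -> p1 != p3 -> p2 != p3 -> uniq [:: p1; p2; p3].
  by move=> h12 h13 h23; rewrite /= !inE !negb_or h12 h13 h23.
have [t1 e1] := c2_pen (U _ _ _ ab ac bc) sQ lQ ha hb hc.
have ha2 : Q.[a] = k * ((a - c) * (a - b)) ^+ 2 by rewrite ha; ring.
have hc2 : Q.[c] = k * ((c - a) * (c - b)) ^+ 2 by rewrite hc.
have hb2 : Q.[b] = k * ((b - a) * (b - c)) ^+ 2 by rewrite hb.
have [t2 e2] := c2_pen (U _ _ _ ac ab cb) sQ lQ ha2 hc2 hb2.
have hb3 : Q.[b] = k * ((b - c) * (b - a)) ^+ 2 by rewrite hb; ring.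
have hc3 : Q.[c] = k * ((c - b) * (c - a)) ^+ 2 by rewrite hc; ring.
have ha3 : Q.[a] = k * ((a - b) * (a - c)) ^+ 2 by rewrite ha.
have [t3 e3] := c2_pen (U _ _ _ bc ba ca) sQ lQ hb3 hc3 ha3.
have [t10|t10] := eqVneq t1 0.
  left; exists (Npair (A2 a b) ('X - c%:P)); split.
  - by rewrite e1 t10 polyC0 mul0r addr0.
  - exact: c2_size.
  - move=> r; exact: (c2_nodouble two ca cb).
have [t20|t20] := eqVneq t2 0.
  left; exists (Npair (A2 a c) ('X - b%:P)); split.
  - by rewrite e2 t20 polyC0 mul0r addr0.
  - exact: c2_size.
  - move=> r; exact: (c2_nodouble two ba bc).
have [t30|t30] := eqVneq t3 0.
  left; exists (Npair (A2 b c) ('X - a%:P)); split.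
  - by rewrite e3 t30 polyC0 mul0r addr0.
  - exact: c2_size.
  - move=> r; exact: (c2_nodouble two ab ac).
right => r r0 r1.
have sq0 (x : C) : x != 0 -> k * x ^+ 2 != 0 by move=> x0; rewrite mulf_neq0 // expf_neq0.
have nz p : p = a \/ p = b \/ p = c -> Q.[p] != 0.
  case=> [->|[->|->]]; [rewrite ha|rewrite hb|rewrite hc];
    apply: sq0; rewrite !mulf_neq0 //; by rewrite subr_eq0.
have ra : r != a by apply/eqP => e; move: (nz r (or_introl e)); rewrite r0 eqxx.
have rb : r != b.
  by apply/eqP => e; move: (nz r (or_intror (or_introl e))); rewrite r0 eqxx.
have rc : r != c.
  by apply/eqP => e; move: (nz r (or_intror (or_intror e))); rewrite r0 eqxx.
have h1 := c2_fin k0 t10 e1 r0 r1 ra rb rc.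
have h2 := c2_fin k0 t20 e2 r0 r1 ra rc rb.
have h3 := c2_fin k0 t30 e3 r0 r1 rb rc ra.
have y0 (p : C) : r != p -> (r - p)^-1 != 0 by move=> rp; rewrite invr_eq0 subr_eq0.
apply: (ylemma two _ _ _ _ _ _ h1 h2 (esym h3)); rewrite ?y0 //; exact: yd.
Qed.

End Core2.

Section Main.
Variable C : closedFieldType.

Lemma finite_part (s : seq (option C)) : uniq s -> exists F : seq C,
  [/\ uniq F, (forall c, (c \in F) = (Some c \in s)) & (size F + (None \in s))%N = size s].
Proof.
elim: s => [|x s IH] /=; first by exists [::].
case/andP => xs us; have [F [uF mF sF]] := IH us.
case: x xs => [c|] xs.
- exists (c :: F); split.
  + by rewrite /= mF xs uF.
  + by move=> c'; rewrite !inE mF (inj_eq (@Some_inj _)).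
  + by rewrite /= in_cons /= addSn sF.
- exists F; split.
  + by [].
  + by move=> c; rewrite mF in_cons.
  + by move: sF; rewrite (negbTE xs) in_cons eqxx /= addn0 addn1 => ->.
Qed.

Lemma uniq4 (a b c d : C) : uniq [:: a; b; c; d] ->
  [/\ a != b, a != c, a != d & [/\ b != c, b != d & c != d]].
Proof. by rewrite /= !inE !negb_or; case/and4P => /and3P [-> -> ->] /andP [-> ->] ->. Qed.

Lemma uniq3 (a b c : C) : uniq [:: a; b; c] -> [/\ a != b, a != c & b != c].
Proof. by rewrite /= !inE !negb_or; case/and3P => /andP [-> ->] ->. Qed.

End Main.

Section Main2.
Variable C : closedFieldType.
Hypothesis two : (2%:R : C) != 0.

Lemma ar5 (s : nat) : ~ ((2 * 4)%N%:Z - 3%:Z - s%:Z < 0) -> (s <= 5)%N.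
Proof. lia. Qed.

Lemma ar6 (s : nat) : ((2 * 3)%N%:Z - 3%:Z - s%:Z = -2) -> s = 5%N.
Proof. lia. Qed.

Lemma main_gen (n d : {poly C}) (k : C) : k != 0 -> n != 0 -> d != 0 ->
  (exists poles : seq (option C),
      [/\ uniq poles, size poles = 4%N,
          (forall x, qd_ord n d x < 0 <-> x \in poles) &
          (forall x, x \in poles -> qd_ord n d x = -2 /\ qd_lcoef n d x = k)]) ->
  exists zeros : seq (option C),
    [/\ uniq zeros,
        (forall x, 0 < qd_ord n d x <-> x \in zeros) &
        (size zeros = 2%N /\ (forall x, x \in zeros -> qd_ord n d x = 2))
        \/
        (size zeros = 4%N /\ (forall x, x \in zeros -> qd_ord n d x = 1))].
Proof.
move=> k0 n0 d0 [poles [up sp Hneg Hpole]].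
have [F [uF mF sF]] := finite_part up.
have HnegF c : qd_ord n d (Some c) < 0 <-> c \in F by rewrite mF; exact: Hneg.
have HpoleF c : c \in F -> qd_ord n d (Some c) = -2 /\ qd_lcoef n d (Some c) = k.
  by rewrite mF; exact: Hpole.
have [Q [Q0 Hnot Hroot Hval [oN lN]]] := reduce n0 d0 uF HnegF HpoleF.
have H2 c : c \in F -> qd_ord n d (Some c) < 0 /\ ~~ root Q c.
  by move=> cF; split; [apply/HnegF | apply: Hroot].
have prodE (l : seq C) : \prod_(z <- l) ('X - z%:P) = foldr (fun z p => ('X - z%:P) * p) 1 l.
  by elim: l => [|z l IH]; rewrite ?big_nil // big_cons IH.
case Nin: (None \in poles); rewrite sp in sF.
-
  have sF3 : size F = 3%N by move: sF; rewrite Nin addn1 => -[].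
  have [oNm lNk] := Hpole None Nin.
  have sQ : size Q = 5%N by move: oN; rewrite oNm sF3 => /esym; exact: ar6.
  move: F uF mF sF HnegF HpoleF Hnot Hroot Hval oN H2 sF3 => [|a [|b [|c [|? ?]]]] // uF.
  move=> _ _ _ _ Hnot _ Hval oN H2 _.
  have [ab ac bc] := uniq3 uF.
  have va : Q.[a] = k * ((a - b) * (a - c)) ^+ 2.
    rewrite (Hval a (('X - b%:P) * ('X - c%:P))) ?inE ?eqxx ?hE //.
    by rewrite prodE /=; ring.
  have vb : Q.[b] = k * ((b - a) * (b - c)) ^+ 2.
    rewrite (Hval b (('X - a%:P) * ('X - c%:P))) ?inE ?eqxx ?orbT ?hE //.
    by rewrite prodE /=; ring.
  have vc : Q.[c] = k * ((c - a) * (c - b)) ^+ 2.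
    rewrite (Hval c (('X - a%:P) * ('X - b%:P))) ?inE ?eqxx ?orbT ?hE //.
    by rewrite prodE /=; ring.
  have lQ : lead_coef Q = k by rewrite -lN; case: (Hpole None Nin).
  case: (core2 two ab ac bc k0 sQ lQ va vb vc).
  + move=> [N [eQ sN nd]].
    have sN' : (2 <= size N <= 3)%N by rewrite sN.
    have [zs [u i z]] := fin22 k0 eQ sN' nd
       (or_intror (conj (erefl : size [:: a; b; c] = 3%N) sN)) Hnot H2 oN.
    by exists zs; split => //; left.
  + move=> nd.
    have [zs [u i z]] := fin1111 Q0 nd (or_intror (conj (erefl : size [:: a; b; c] = 3%N) sQ)) Hnot H2 oN.
    by exists zs; split => //; right.
-
  have sF4 : size F = 4%N by move: sF; rewrite Nin addn0.
  have oNn : ~ (qd_ord n d None < 0) by rewrite Hneg Nin.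
  have sQ : (size Q <= 5)%N by move: oNn; rewrite oN sF4; exact: ar5.
  move: F uF mF sF HnegF HpoleF Hnot Hroot Hval oN H2 sF4 => [|a [|b [|c [|d' [|? ?]]]]] // uF.
  move=> _ _ _ _ Hnot _ Hval oN H2 _.
  have [ab ac ad [bc bd cd]] := uniq4 uF.
  have va : Q.[a] = k * ((a - b) * (a - c) * (a - d')) ^+ 2.
    rewrite (Hval a (('X - b%:P) * ('X - c%:P) * ('X - d'%:P))) ?inE ?eqxx ?hE //.
    by rewrite prodE /=; ring.
  have vb : Q.[b] = k * ((b - a) * (b - c) * (b - d')) ^+ 2.
    rewrite (Hval b (('X - a%:P) * ('X - c%:P) * ('X - d'%:P))) ?inE ?eqxx ?orbT ?hE //.
    by rewrite prodE /=; ring.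
  have vc : Q.[c] = k * ((c - a) * (c - b) * (c - d')) ^+ 2.
    rewrite (Hval c (('X - a%:P) * ('X - b%:P) * ('X - d'%:P))) ?inE ?eqxx ?orbT ?hE //.
    by rewrite prodE /=; ring.
  have vd : Q.[d'] = k * ((d' - a) * (d' - b) * (d' - c)) ^+ 2.
    rewrite (Hval d' (('X - a%:P) * ('X - b%:P) * ('X - c%:P))) ?inE ?eqxx ?orbT ?hE //.
    by rewrite prodE /=; ring.
  case: (core1 two ab ac ad bc bd cd k0 sQ va vb vc vd).
  + move=> [N [eQ sN nd]].
    have [zs [u i z]] := fin22 k0 eQ sN nd (or_introl (erefl : size [:: a; b; c; d'] = 4%N)) Hnot H2 oN.
    by exists zs; split => //; left.
  + move=> [nd s4].
    have [zs [u i z]] := fin1111 Q0 nd (or_introl (conj (erefl : size [:: a; b; c; d'] = 4%N) (introT andP (conj s4 sQ)))) Hnot H2 oN.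
    by exists zs; split => //; right.
Qed.

End Main2.

Theorem lemma3p1 (R : realType) (n d : {poly R[i]}) :
  n != 0 -> d != 0 ->
  (exists poles : seq (option R[i]),
      [/\ uniq poles, size poles = 4%N,
          (forall x, qd_ord n d x < 0 <-> x \in poles) &
          (forall x, x \in poles ->
             qd_double_pole_res (Complex pi 0) n d x 1)]) ->
  exists zeros : seq (option R[i]),
    [/\ uniq zeros,
        (forall x, 0 < qd_ord n d x <-> x \in zeros) &
        (size zeros = 2%N /\ (forall x, x \in zeros -> qd_ord n d x = 2))
        \/
        (size zeros = 4%N /\ (forall x, x \in zeros -> qd_ord n d x = 1))].
Proof.
move=> n0 d0 [poles [up sp Hneg Hpole]].
have two : (2%:R : R[i]) != 0 by rewrite pnatr_eq0.
have pi0 : (Complex (pi : R) 0) != 0.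
  by rewrite eq_complex /= negb_and (gt_eqF (pi_gt0 R)).
have k0 : - (1 ^+ 2) / (4%:R * (Complex (pi : R) 0) ^+ 2) != 0.
  rewrite mulf_neq0 // ?oppr_eq0 ?expr1n ?oner_eq0 // invr_eq0.
  by rewrite mulf_neq0 ?pnatr_eq0 // expf_neq0.
apply: (main_gen two k0 n0 d0); exists poles; split => // x xp.
Qed.
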